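(* Let $p,q,p',q'$ be primes. In the algebra $(\mathbb N,\cdot,\mathbb N)$, $$p:q::_m p':q'\iff (p=q\text{ and }p'=q')\ \text{or}\ (p=p'\text{ and }q=q').$$
   Context: $(\mathbb N,\cdot,\mathbb N)$ is the algebra with universe the natural numbers $\mathbb N$, multiplication, and every natural number as a constant. A justification is a pair of terms $s\to t$ with the variables of $t$ among those of $s$; monolinear justifications are those where $s,t$ contain only one fixed variable $x$, occurring at most once in $s$ and at most once in $t$. $\uparrow^m(a\to b)$ is the set of monolinear justifications $s\to t$ with $a=s(\mathbf o)$, $b=t(\mathbf o)$ for some value $\mathbf o$; $\uparrow^m(a\to b:\!\cdot\,c\to d):=\uparrow^m(a\to b)\cap\uparrow^m(c\to d)$. A monolinear justification is trivial if it lies in all sets $\uparrow^m(a'\to b':\!\cdot\,c'\to d')$. $a\to b:\!\cdot_m\,c\to d$ holds iff either (i) all justifications in $\uparrow^m(a\to b)\cup\uparrow^m(c\to d)$ are trivial, or (ii) $J_d:=\uparrow^m(a\to b:\!\cdot\,c\to d)$ contains a non-trivial justification and for every $d'$, $J_d\subseteq J_{d'}$ implies $J_{d'}$ contains a non-trivial justification and $J_{d'}\subseteq J_d$ (ignoring trivial justifications). $a:b::_m c:d$ iff $a\to b:\!\cdot_m\,c\to d$, $b\to a:\!\cdot_m\,d\to c$, $c\to d:\!\cdot_m\,a\to b$, $d\to c:\!\cdot_m\,b\to a$ all hold. *)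

(* Defs.v *)
From mathcomp Require Import all_boot.
Set Implicit Arguments.
Unset Strict Implicit.
Unset Printing Implicit Defensive.

(* Terms of the algebra (N, *, N) in the single fixed variable x:
   the variable, a constant for every natural number, and products. *)
Inductive term : Type :=
  | Var : term
  | Cst : nat -> term
  | Mul : term -> term -> term.

Fixpoint eval (o : nat) (t : term) : nat :=
  match t with
  | Var => o
  | Cst n => n
  | Mul s u => eval o s * eval o u
  end.

Fixpoint occ (t : term) : nat :=
  match t with
  | Var => 1
  | Cst _ => 0
  | Mul s u => occ s + occ u
  end.

Definition justification := (term * term)%type.

Definition monolinear (j : justification) : Prop :=
  occ j.1 <= 1 /\ occ j.2 <= 1 /\ (0 < occ j.2 -> 0 < occ j.1).

Definition up (a b : nat) (j : justification) : Prop :=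
  monolinear j /\ exists o, eval o j.1 = a /\ eval o j.2 = b.

Definition up2 (a b c d : nat) (j : justification) : Prop :=
  up a b j /\ up c d j.

Definition trivial_just (j : justification) : Prop :=
  monolinear j /\ forall a' b' c' d', up2 a' b' c' d' j.

(* a -> b :·_m c -> d ; inclusions are taken ignoring trivial justifications *)
Definition arrow_m (a b c d : nat) : Prop :=
  (forall j, (up a b j \/ up c d j) -> trivial_just j)
  \/
  ((exists j, up2 a b c d j /\ ~ trivial_just j) /\
   forall d',
     (forall j, up2 a b c d j -> ~ trivial_just j -> up2 a b c d' j) ->
     (exists j, up2 a b c d' j /\ ~ trivial_just j) /\
     (forall j, up2 a b c d' j -> ~ trivial_just j -> up2 a b c d j)).

Definition analogy_m (a b c d : nat) : Prop :=
  arrow_m a b c d /\ arrow_m b a d c /\ arrow_m c d a b /\ arrow_m d c b a.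

(* Main.v *)
Require Import Defs.
From mathcomp Require Import all_boot.
From Stdlib Require Import Lia.

Lemma eval0 t o : occ t = 0 -> eval o t = eval 0 t.
Proof.
elim: t => //= s IHs u IHu.
by move/eqP; rewrite addn_eq0 => /andP[/eqP/IHs -> /eqP/IHu ->].
Qed.

Lemma eval1 t o : occ t = 1 -> eval o t = eval 1 t * o.
Proof.
elim: t => //= [|s IHs u IHu]; first by rewrite mul1n.
case Hs: (occ s) => [|[|k]]; case Hu: (occ u) => [|[|l]] //= _.
- by rewrite (eval0 _ o Hs) (eval0 _ 1 Hs) (IHu Hu) mulnA.
- by rewrite (eval0 _ o Hu) (eval0 _ 1 Hu) (IHs Hs) mulnAC.
Qed.

Lemma prime_mul x y : prime (x * y) -> x = 1 \/ y = 1.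
Proof.
move=> P; case/primeP: (P) => _ H.
case/orP: (H x (dvdn_mulr y (dvdnn x))) => /eqP E; first by left.
right; have xp : 0 < x by clear H; case: x E P => //; rewrite mul0n.
by apply/eqP; rewrite -(eqn_pmul2l xp) muln1 -E.
Qed.

Lemma up_cst a b : up a b (Cst a, Cst b).
Proof. by split; [split=> //= | exists 0]. Qed.

Lemma key a b c d : prime a -> prime b -> prime c -> prime d ->
  arrow_m a b c d -> b = d \/ (a = b /\ c = d).
Proof.
move=> pa pb pc pd H.
have [j [[[h1 [h2 h3]] [o1 [e1 e2]]] [_ [o2 [e3 e4]]]]] :
    exists j, up2 a b c d j.
  case: H => [H|[[j [Hj _]] _]]; last by exists j.
  exists (Cst a, Cst b); apply: (proj2 (H (Cst a, Cst b) _)).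
  by left; apply: up_cst.
case: j h1 h2 h3 e1 e2 e3 e4 => s t /= h1 h2 h3 e1 e2 e3 e4.
case Ht: (occ t) h2 h3 => [|[|k]] // _ h3.
  by left; rewrite -e2 -e4 !(eval0 _ _ Ht).
have Hs : occ s = 1 by case: (occ s) h1 h3 => [|[|]] // _ /(_ erefl).
rewrite (eval1 _ o1 Hs) in e1; rewrite (eval1 _ o2 Hs) in e3.
rewrite (eval1 _ o1 Ht) in e2; rewrite (eval1 _ o2 Ht) in e4.
have pa1 : prime (eval 1 s * o1) by rewrite e1.
case: (prime_mul _ _ pa1) => E.
- rewrite E !mul1n in e1 e3; subst o1 o2.
  have : eval 1 t = 1 \/ a = 1 by apply: prime_mul; rewrite e2.
  case=> E2; last by rewrite E2 in pa.
  by right; rewrite -e2 -e4 E2 !mul1n.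
- subst o1; rewrite !muln1 in e1 e2.
  have pc1 : prime (eval 1 s * o2) by rewrite e3.
  case: (prime_mul _ _ pc1) => E3.
    by move: pa; rewrite -e1 E3.
  by left; rewrite -e2 -e4 E3 muln1.
Qed.

Lemma nt_cst a b : ~ trivial_just (Cst a, Cst b).
Proof. case=> _ /(_ a.+1 b a b) [[_ [o [/= E _]]] _]; lia. Qed.

Lemma arrow_same a b : arrow_m a b a b.
Proof.
right; split.
  exists (Cst a, Cst b); split; first by split; apply: up_cst.
  exact: nt_cst.
move=> d' H; split.
  exists (Cst a, Cst b); split.
    apply: H; first by split; apply: up_cst.
    exact: nt_cst.
  exact: nt_cst.
have [_ [_ [o [/= _ ->]]]] : up2 a b a d' (Cst a, Cst b).
  apply: H; first by split; apply: up_cst.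
  exact: nt_cst.
by move=> j Hj _.
Qed.

Lemma arrow_diag a c : arrow_m a a c c.
Proof.
have NT : ~ trivial_just (Var, Var).
  by case=> _ /(_ 0 1 0 0) [[_ [o [/= -> //]]]].
have U : forall n, up n n (Var, Var) by move=> n; split; [split=> //= | exists n].
right; split; first by exists (Var, Var); split=> //; split.
move=> d' H; split.
  by exists (Var, Var); split=> //; apply: H => //; split.
have [_ [_ [o [/= -> ->]]]] : up2 a a c d' (Var, Var) by apply: H => //; split.
by move=> j Hj _.
Qed.

Theorem mainTheorem10 (p q p' q' : nat) :
  prime p -> prime q -> prime p' -> prime q' ->
  (analogy_m p q p' q' <-> (p = q /\ p' = q') \/ (p = p' /\ q = q')).
Proof.
move=> pp pq pp' pq'; split.
  case=> A1 [A2 _].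
  case: (key _ _ _ _ pp pq pp' pq' A1) => [E1|]; last by left.
  case: (key _ _ _ _ pq pp pq' pp' A2) => [E2|[E2 E3]]; first by right.
  by left.
case=> [[<- <-]|[<- <-]].
  by split; [|split; [|split]]; apply: arrow_diag.
by split; [|split; [|split]]; apply: arrow_same.
Qed.
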